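(* Let $H$ be the group defined below (with sets $A_\alpha=\{n\in\omega:\eta_\alpha(n)=1\}$), let $0\to T\to G\xrightarrow{\varphi}H\to 0$ be a balanced exact sequence with $T$ a torsion group (viewed as a subgroup of $G$), and fix elements $g_\alpha\in G$ with $\varphi(g_\alpha)=y_\alpha$ ($\alpha<\kappa$) and $\tilde x_n\in G$ with $\varphi(\tilde x_n)=x_n$ ($n\in\omega$). For $\alpha<\kappa$ and $t\in T$ let $R_{\alpha,t}=\{n\in A_\alpha : g_\alpha-t-\tilde x_n \text{ is not divisible by } p_n \text{ in } G\}$. Let $\alpha<\kappa$ and $t\in T$ be such that $R_{\alpha,t}$ is finite. Then there exists $t_\alpha\in T$ such that $R_{\alpha,t_\alpha}=\emptyset$.
   Context: All groups are abelian. A pure subgroup $A$ of a torsion-free group $G$ is balanced if every coset $g+A$ contains an element $g+a$ ($a\in A$) whose characteristic is $\geq$ that of $g+x$ for all $x\in A$; an exact sequence $0\to A\to G\to C\to0$ is balanced exact if the image of $A$ is balanced in $G$. Setting: $\kappa$ is an uncountable cardinal, $\eta_\alpha:\omega\to 2$ ($\alpha<\kappa$) are the Cohen reals added by the forcing of finite partial functions $\kappa\times\omega\to 2$ (the lemma is considered in the generic extension). Fix primes $p_0<p_1<\cdots$; let $W=\bigoplus_{n\in\omega}\mathbb{Q}x_n\oplus\bigoplus_{\alpha<\kappa}\mathbb{Q}y_\alpha$ on independent elements, $F=\bigoplus_n\mathbb{Z}x_n\oplus\bigoplus_{\alpha<\kappa}\mathbb{Z}y_\alpha$, and $H$ the subgroup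 of $W$ generated by $F$ and all $p_n^{-1}(y_\alpha-x_n)$ with $\eta_\alpha(n)=1$. *)

(* Defs.v *)
From HB Require Import structures.
From mathcomp Require Import all_boot all_order all_algebra.
Set Implicit Arguments. Unset Strict Implicit. Unset Printing Implicit Defensive.
Import Order.TTheory GRing.Theory Num.Theory.
Local Open Scope ring_scope.

(* The Q-vector space W = (+)_n Q x_n (+) (+)_{alpha in K} Q y_alpha, modelled as
   rational-valued functions on the index set nat + K (coordinates w.r.t. the
   independent family x_n, y_alpha); only finitely supported functions arise in H. *)
Definition W (K : Type) := (nat + K)%type -> rat.

Definition xv (K : Type) (n : nat) : W K :=
  fun i => match i with inl m => (m == n)%:R | inr _ => 0 end.
Definition yv (K : eqType) (a : K) : W K :=
  fun i => match i with inl _ => 0 | inr b => (b == a)%:R end.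

Inductive inH (K : eqType) (p : nat -> nat) (eta : K -> nat -> bool) : W K -> Prop :=
| inH0 : inH p eta (fun _ => 0)
| inHx n : inH p eta (@xv K n)
| inHy a : inH p eta (yv a)
| inHgen n a : eta a n -> inH p eta (fun i => (yv a i - @xv K n i) / (p n)%:R)
| inHsub u v : inH p eta u -> inH p eta v -> inH p eta (fun i => u i - v i).

Definition divisible_by (G : zmodType) (m : nat) (g : G) : Prop :=
  exists z : G, g = z *+ m.

Definition char_ge (G : zmodType) (a b : G) : Prop :=
  forall q k : nat, prime q -> divisible_by (q ^ k) b -> divisible_by (q ^ k) a.

Definition pure_subgroup (G : zmodType) (A : G -> Prop) : Prop :=
  forall (a : G) (m : nat), A a -> divisible_by m a ->
    exists z : G, A z /\ a = z *+ m.

Definition balanced (G : zmodType) (A : G -> Prop) : Prop :=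
  pure_subgroup A /\
  forall g : G, exists a : G, A a /\ forall x : G, A x -> char_ge (g + a) (g + x).

Definition Rset (K : Type) (G : zmodType) (p : nat -> nat) (eta : K -> nat -> bool)
  (g : K -> G) (xt : nat -> G) (a : K) (t : G) (n : nat) : Prop :=
  eta a n /\ ~ divisible_by (p n) (g a - t - xt n).

(* Main.v *)
Require Import Defs.
From HB Require Import structures.
From mathcomp Require Import all_boot all_order all_algebra.
From Stdlib Require Import Classical FunctionalExtensionality.
Import Order.TTheory GRing.Theory Num.Theory.
Local Open Scope ring_scope.

Section H.
Variable G : zmodType.

Lemma divD q (x y : G) : divisible_by q x -> divisible_by q y -> divisible_by q (x + y).
Proof. by move=> [z1 ->] [z2 ->]; exists (z1 + z2); rewrite mulrnDl. Qed.

Lemma divN q (x : G) : divisible_by q x -> divisible_by q (- x).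
Proof. by move=> [z ->]; exists (- z); rewrite mulNrn. Qed.

Lemma divM q n (x : G) : divisible_by q (x *+ (n * q)).
Proof. by exists (x *+ n); rewrite -mulrnA. Qed.

Lemma kill_div (x : G) M q : (0 < M)%N -> x *+ M = 0 -> coprime q M -> divisible_by q x.
Proof.
move=> M0 xM cq; have [a _ ] := Bezoutl q M0.
rewrite gcdnC (eqP cq) => /dvdnP [c Hc].
have : x *+ (1 + a * q) = 0 by rewrite Hc mulnC mulrnA xM mul0rn.
rewrite mulrnDr mulr1n => /eqP; rewrite addr_eq0 => /eqP ->.
by apply: divN; apply: divM.
Qed.

Lemma split_kill (x : G) A B : (0 < A)%N -> coprime A B -> x *+ (A * B) = 0 ->
  exists j1 j2 : nat, x = - (x *+ j1) + x *+ j2 /\ (x *+ j1) *+ A = 0 /\ (x *+ j2) *+ B = 0.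
Proof.
move=> A0 cAB xAB; have [a _] := Bezoutl B A0.
rewrite (eqP cAB) => /dvdnP [c Hc].
exists (a * B)%N, (c * A)%N; split; last split.
- have : x *+ (1 + a * B) = x *+ (c * A) by rewrite Hc.
  by rewrite mulrnDr mulr1n => <-; rewrite (addrC x) addKr.
- by rewrite -mulrnA -mulnA (mulnC B) mulnC mulrnA xAB mul0rn.
- by rewrite -mulrnA -mulnA mulnC mulrnA xAB mul0rn.
Qed.
End H.

Lemma subDA (G : zmodType) (x y z w : G) : x - (y + z) - w = (x - y - w) - z.
Proof. by rewrite opprD !addrA (addrAC _ (- z)). Qed.

Theorem lemma4p5
  (K : eqType)
  (K_uncountable : ~ exists f : K -> nat, injective f)
  (p : nat -> nat) (p_prime : forall n, prime (p n))
  (p_incr : forall n, (p n < p n.+1)%N)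
  (eta : K -> nat -> bool)
  (G : zmodType) (T : G -> Prop)
  (T0 : T 0) (Tsub : forall u v, T u -> T v -> T (u - v))
  (T_torsion : forall u, T u -> exists m : nat, (0 < m)%N /\ u *+ m = 0)
  (phi : G -> W K)
  (phi_add : forall u v, phi (u + v) = (fun i => phi u i + phi v i))
  (phi_into : forall u, inH p eta (phi u))
  (phi_onto : forall h, inH p eta h -> exists u, phi u = h)
  (phi_ker : forall u, phi u = (fun _ => 0) <-> T u)
  (T_balanced : balanced T)
  (g : K -> G) (hg : forall a, phi (g a) = yv a)
  (xt : nat -> G) (hxt : forall n, phi (xt n) = @xv K n)
  (a : K) (t : G) (ht : T t)
  (R_finite : exists N : nat, forall n, Rset p eta g xt a t n -> (n < N)%N) :
  exists ta : G, T ta /\ forall n, ~ Rset p eta g xt a ta n.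
Proof.
have phi0 : phi 0 = (fun _ => 0).
  apply/functional_extensionality => i.
  have := congr1 (fun f => f i) (phi_add 0 0); rewrite addr0 /= => E.
  by rewrite -[LHS](addrK (phi 0 i)) -E subrr.
have phiN u : phi (- u) = (fun i => - phi u i).
  apply/functional_extensionality => i.
  have := congr1 (fun f => f i) (phi_add u (- u)); rewrite subrr phi0 /=.
  by move/esym/eqP; rewrite addrC addr_eq0 => /eqP.
have phiMn u n : phi (u *+ n) = (fun i => phi u i *+ n).
  elim: n => [|n IHn]; first by rewrite mulr0n phi0; apply/functional_extensionality => i.
  by rewrite mulrSr phi_add IHn; apply/functional_extensionality => i; rewrite mulrSr.
have TN u : T u -> T (- u) by move=> Tu; rewrite -sub0r; apply: Tsub.
have TD u v : T u -> T v -> T (u + v).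
  by move=> Tu Tv; rewrite -(opprK v); apply: Tsub => //; apply: TN.
have TMn u n : T u -> T (u *+ n).
  by move=> Tu; elim: n => [|n IHn]; rewrite ?mulr0n // mulrS; apply: TD.
have pmono m n : (m < n)%N -> (p m < p n)%N.
  elim: n => // n IHn; rewrite ltnS leq_eqVlt => /orP [/eqP -> //|/IHn H].
  exact: ltn_trans H (p_incr n).
have pneq m n : m <> n -> p m <> p n.
  move=> mn E; case: (ltngtP m n) => [/pmono|/pmono|/eqP //]; rewrite E ltnn //.
have div_far (v : G) N k n : v *+ (p N ^ k) = 0 -> N <> n -> divisible_by (p n) v.
  move=> vk Nn; apply: (@kill_div _ v (p N ^ k)) => //; first by rewrite expn_gt0 prime_gt0.
  apply: coprimeXr; rewrite prime_coprime // dvdn_prime2 //.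
  by apply/eqP => E; apply: (pneq _ _ Nn); rewrite E.
case: R_finite => N; elim: N t ht => [|N IH] t ht HR.
  by exists t; split => // n /HR.
case: (classic (Rset p eta g xt a t N)) => HN; last first.
  apply: (IH t ht) => n Hn; have := HR n Hn.
  by rewrite ltnS leq_eqVlt => /orP [/eqP E|//]; subst.
case: (HN) => eN ndiv.
have [h hh] := phi_onto _ (@inHgen K p eta N a eN).
set s := g a - t - xt N - h *+ p N.
have pN0 : ((p N)%:R : rat) != 0 by rewrite pnatr_eq0 -lt0n prime_gt0.
have Ts : T s.
  apply/phi_ker; rewrite /s (phi_add (g a - t - xt N)) (phi_add (g a - t)) (phi_add (g a)) !phiN phiMn hh hg hxt.
  rewrite (proj2 (phi_ker t) ht); apply/functional_extensionality => i /=.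
  by rewrite -(mulr_natr ((yv a i - xv N i) / (p N)%:R)) divfK // subr0 subrr.
have [m [m0 sm]] := T_torsion s Ts.
have [j1 [j2 [sE [k1 k2]]]] := @split_kill G s (m`_(p N))%N (m`_(p N)^')%N
   (part_gt0 _ _) (coprime_partC _ _ _) (ltac:(by rewrite partnC)).
set e := - (s *+ j1).
have Te : T e by apply/TN/TMn.
apply: (IH (t + e)); first exact: TD.
move=> n [en nd]; case: (ltngtP n N) => // Hn.
  exfalso; apply: nd; rewrite subDA; apply: divD; last first.
    apply/divN/(@div_far e N (logn (p N) m)); last by move=> E; rewrite E ltnn in Hn.
    by rewrite /e -p_part mulNrn k1 oppr0.
  apply: NNPP => nd'.
  have := HR n (conj en nd'); rewrite ltnS leqNgt Hn //.
subst n; exfalso; apply: nd; rewrite subDA.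
have -> : g a - t - xt N = s + h *+ p N by rewrite /s subrK.
rewrite {1}sE -/e -addrA addrC addrA subrK addrC.
apply: divD; last by exists h.
apply: (@kill_div _ _ (m`_(p N)^')%N (p N) (part_gt0 _ _) k2).
apply: pnat_coprime; last exact: part_pnat.
exact: pnat_id.
Qed.
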